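(* Let $X$ and $Y$ be Hausdorff compact spaces and $\pi: X \to Y$ a fully closed continuous surjection. Let $y_1, \dots, y_n \in Y$ be distinct points and, for each $i = 1,\dots,n$, let $f_i$ be a real-valued continuous function on $\pi^{-1}(y_i)$. Then there exists $\tilde f \in C(X)$ such that $\tilde f|_{\pi^{-1}(y_i)} = f_i$ for $i=1,\dots,n$ and $\tilde f$ has oscillation $0$ (i.e. is constant) on $\pi^{-1}(y')$ for every $y' \in Y \setminus \{y_1,\dots,y_n\}$.
   Context: A continuous surjection $\pi: X \to Y$ between Hausdorff compacta is fully closed if for any two closed disjoint subsets $F_1, F_2 \subset X$ the set $\pi(F_1)\cap\pi(F_2)$ is finite. $C(X)$ denotes the real continuous functions on $X$. *)

(* Defs.v *)
From mathcomp Require Import all_boot all_order all_algebra.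
From mathcomp Require Import all_classical all_reals all_analysis.
From mathcomp Require Import Rstruct Rstruct_topology.
Set Implicit Arguments. Unset Strict Implicit. Unset Printing Implicit Defensive.
Local Open Scope classical_set_scope.

Definition fully_closed (X Y : topologicalType) (p : X -> Y) : Prop :=
  forall F1 F2 : set X, closed F1 -> closed F2 -> F1 `&` F2 = set0 ->
    finite_set (p @` F1 `&` p @` F2).

(* Main.v *)
From HB Require Import structures.
From mathcomp Require Import all_boot all_order all_algebra.
From mathcomp Require Import all_classical all_reals all_analysis.
From mathcomp Require Import Rstruct Rstruct_topology.
Require Import Defs.
Set Implicit Arguments. Unset Strict Implicit. Unset Printing Implicit Defensive.
From mathcomp Require Import lra.
Import Order.TTheory GRing.Theory Num.Theory.
Local Open Scope classical_set_scope.

Section ZSec.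
Context (X Y : topologicalType) (p : X -> Y) (S : set Y).
Definition zrel (a b : X) := a = b \/ (p a = p b /\ ~ S (p a)).
Definition zsat (U : set X) := forall a b, zrel a b -> U a -> U b.
Definition zop (U : set X) := open U /\ zsat U.
Definition ZT (_ : X -> Y) (_ : set Y) : Type := X.
HB.instance Definition _ := Choice.on (ZT p S).
Lemma zopT : zop setT.
Proof. by split; [exact: openT|]. Qed.
Lemma zopI : setI_closed zop.
Proof.
move=> A B [oA sA] [oB sB]; split; first exact: openI.
by move=> a b r [Aa Ba]; split; [exact: sA r Aa|exact: sB r Ba].
Qed.
Lemma zop_bigU (I : Type) (f : I -> set X) : (forall i, zop (f i)) -> zop (\bigcup_i f i).
Proof.
move=> H; split; first by apply: bigcup_open => i _; case: (H i).
by move=> a b r [i _ fa]; exists i => //; case: (H i) => _; apply; [exact: r|].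
Qed.
HB.instance Definition _ := isOpenTopological.Build (ZT p S) zopT zopI zop_bigU.

Lemma zopenE (U : set (ZT p S)) : open U <-> zop U.
Proof. by []. Qed.
End ZSec.

Section ZProps.
Context (X Y : topologicalType) (hX : hausdorff_space X) (cX : compact [set: X])
  (hY : hausdorff_space Y) (p : X -> Y) (pc : continuous p)
  (pfc : fully_closed p) (S : set Y).

Local Notation zr := (zrel p S).

Lemma zrel_p a b : zr a b -> p a = p b.
Proof. by case=> [->|[]]. Qed.

Lemma zrel_refl a : zr a a.
Proof. by left. Qed.

Lemma zrel_sym a b : zr a b -> zr b a.
Proof. by case=> [->|[e nS]]; [left|right; rewrite -e]. Qed.

Lemma zrel_trans a b c : zr a b -> zr b c -> zr a c.
Proof.
case=> [->//|[e nS]]; case=> [<-|[e' _]]; first by right.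
by right; rewrite e e'; split => //; rewrite -e' -e.
Qed.

Definition zcl (F : set X) := [set b | exists2 a, F a & zr a b].

Lemma zcl_sat F : zsat p S (zcl F).
Proof. by move=> a b r [c Fc rc]; exists c => //; exact: zrel_trans rc r. Qed.

Lemma sub_zcl F : F `<=` zcl F.
Proof. by move=> a Fa; exists a => //; left. Qed.

Lemma pimage_closed (F : set X) : closed F -> closed (p @` F).
Proof.
move=> cF; apply: compact_closed => //; apply: continuous_compact.
  exact: continuous_subspaceT.
exact: subclosed_compact cF cX _.
Qed.

Lemma zcl_closed F : closed F -> closed (zcl F).
Proof.
move=> cF x clx; apply: contrapT => nx.
suff [B nB HB] : exists2 B, nbhs x B & forall b, B b -> ~ zcl F b.
  by have [b [zb Bb]] := clx B nB; exact: HB b Bb zb.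
have [[a Fa pax]|npx] := pselect ((p @` F) (p x)).
- have Spx : S (p x).
    apply: contrapT => nS; apply: nx; exists a => //; right; rewrite pax.
    by split.
  have nFx : ~ F x by move=> Fx; apply: nx; exists x => //; left.
  have nbF : nbhs x (~` F).
    by apply: open_nbhs_nbhs; split => //; exact: closed_openC.
  have := @compact_regular X x setT hX cX filterT _ nbF.
  move=> [V nV clV].
  have WF : closure V `&` F = set0.
    by apply/seteqP; split => // z [/clV].
  have fin := pfc (@closed_closure _ V) cF WF.
  pose E := (p @` closure V `&` p @` F) `\` [set p x].
  have cE : closed E.
    apply: ((@accessible_finite_set_closed Y).1 (hausdorff_accessible hY)).
    exact: finite_setD.
  exists (V `&` p @^-1` (~` E)).
    apply: filterI => //; apply: open_nbhs_nbhs; split.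
      apply: open_comp; [move=> z _; exact: pc|exact: closed_openC].
    by case=> _ /(_ erefl).
  move=> b [Vb nEb] [a' Fa' [e|[pab nSa]]].
    by subst a'; exact: clV _ (subset_closure Vb) Fa'.
  apply: nEb; split; first split.
  + by exists b => //; exact: subset_closure.
  + by exists a'.
  + by move=> /= pbx; apply: nSa; rewrite pab pbx.
- exists (p @^-1` (~` (p @` F))).
    apply: open_nbhs_nbhs; split => //; apply: open_comp.
      by move=> z _; exact: pc.
    exact: closed_openC (pimage_closed cF).
  by move=> b nb [a Fa r]; apply: nb; exists a => //; exact: zrel_p r.
Qed.


Definition zint (U : set X) := ~` zcl (~` U).

Lemma zint_open U : open U -> open (zint U).
Proof. by move=> oU; apply: closed_openC; apply: zcl_closed; exact: open_closedC. Qed.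

Lemma zint_sat U : zsat p S (zint U).
Proof.
move=> a b r na [c nUc rc]; apply: na; exists c => //.
exact: zrel_trans rc (zrel_sym r).
Qed.

Lemma zint_sub U : zint U `<=` U.
Proof. by move=> x nx; apply: contrapT => nU; apply: nx; exists x => //; left. Qed.

Lemma zint_S U x : S (p x) -> U x -> zint U x.
Proof. by move=> Sx Ux [c nUc [e|[e nS]]]; [subst c|apply: nS; rewrite e]. Qed.

Lemma sat_sub_zint A U : zsat p S A -> A `<=` U -> A `<=` zint U.
Proof.
by move=> sA AU a Aa [c nUc rc]; apply: nUc; apply: AU; exact: sA (zrel_sym rc) Aa.
Qed.

Lemma nbhsZX (x : X) (B : set X) : nbhs (x : ZT p S) B -> nbhs x B.
Proof.
case=> C [[oC _] Cx CB].
have nC : nbhs x C by exact: open_nbhs_nbhs.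
exact: (filterS CB nC).
Qed.

Lemma nbhsXZ (x : X) (B : set X) : S (p x) -> nbhs x B -> nbhs (x : ZT p S) B.
Proof.
move=> Sx nB; exists (zint B°); split.
- by split; [apply: zint_open; exact: open_interior|exact: zint_sat].
- by apply: zint_S.
- by move=> z /zint_sub; exact: interior_subset.
Qed.

Lemma nbhsZ_rel a b (B : set X) : zr a b -> nbhs (a : ZT p S) B -> nbhs (b : ZT p S) B.
Proof. by move=> r [C [[oC sC] Ca CB]]; exists C; split => //; exact: sC r Ca. Qed.

Lemma zclosedX (A : set (ZT p S)) : closed A -> closed (A : set X) /\ zsat p S A.
Proof.
move=> cA; have [oA sA] : zop p S (~` A) := closed_openC cA.
split; first by rewrite -openC.
by move=> a b r Aa; apply: contrapT => nb; exact: sA _ _ (zrel_sym r) nb Aa.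
Qed.

Lemma Xclosed_Z (A : set X) : closed A -> zsat p S A -> closed (A : set (ZT p S)).
Proof.
move=> cA sA; rewrite -openC; split; first by rewrite openC.
by move=> a b r nA Ab; apply: nA; exact: sA _ _ (zrel_sym r) Ab.
Qed.

Lemma zT_normal : normal_space (ZT p S).
Proof.
apply/(@normal_openP Rdefinitions.R) => A B cA cB AB0.
have [cAX sA] := zclosedX cA; have [cBX sB] := zclosedX cB.
have nX : normal_space X by exact: compact_normal.
have [U [V [oU oV AU BV UV]]] := (@normal_openP Rdefinitions.R X).1 nX _ _ cAX cBX AB0.
exists (zint U), (zint V); split.
- by split; [exact: zint_open|exact: zint_sat].
- by split; [exact: zint_open|exact: zint_sat].
- exact: sat_sub_zint.
- exact: sat_sub_zint.
- apply/seteqP; split => // z [/zint_sub Uz /zint_sub Vz].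
  by rewrite -UV; split.
Qed.

End ZProps.

Unset Implicit Arguments.
Set Strict Implicit.

Theorem corollary4p4 (X Y : topologicalType)
  (hX : hausdorff_space X) (cX : compact [set: X])
  (hY : hausdorff_space Y) (cY : compact [set: Y])
  (p : X -> Y) (pc : continuous p) (ps : forall y : Y, exists x : X, p x = y)
  (pfc : fully_closed p)
  (n : nat) (y : 'I_n -> Y) (yinj : injective y)
  (f : 'I_n -> X -> Rdefinitions.R)
  (fc : forall i, {within p @^-1` [set y i], continuous (f i)}) :
  exists g : X -> Rdefinitions.R,
    continuous g /\
    (forall i x, p x = y i -> g x = f i x) /\
    (forall y' : Y, (forall i, y' <> y i) ->
       forall x1 x2 : X, p x1 = y' -> p x2 = y' -> g x1 = g x2).
Proof.
pose S := range y.
pose A := p @^-1` S.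
pose F : X -> Rdefinitions.R :=
  fun x => if [pick i | p x == y i] is Some i then f i x else 0%R.
have FE i x : p x = y i -> F x = f i x.
  move=> e; rewrite /F; case: pickP => [j /eqP ej|/(_ i)]; last by rewrite e eqxx.
  by have -> : j = i by apply: yinj; rewrite -ej e.
have finC (D : set Y) : finite_set D -> closed D.
  exact: ((@accessible_finite_set_closed Y).1 (hausdorff_accessible hY)).
have finS : finite_set S by exact: finite_image _ finite_finset.
have cAX : closed A by exact: preimage_closed (fun z _ => pc z) (finC _ finS).
have sA : zsat p S A by move=> a b r; rewrite /A /= (zrel_p r).
pose AZ : set (ZT p S) := A.
have cAZ : closed AZ := Xclosed_Z cAX sA.
have FcX : forall x, A x -> F @ within A (nbhs x) --> F x.
  move=> x [i _ ei].
  have cfi := (subspace_continuousP _ _).1 (fc i) x (esym ei).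
  rewrite (FE i x (esym ei)) => W nW.
  have h1 : nbhs x (fun z => p z = y i -> W (f i z)) := cfi W nW.
  have h2 : nbhs x (p @^-1` ~` (S `\` [set y i])).
    apply: open_nbhs_nbhs; split.
      apply: open_comp; first by move=> z _; exact: pc.
      by apply: closed_openC; apply: finC; exact: finite_setD.
    by rewrite /= -ei => -[_]; apply.
  have FF : Filter (nbhs x) by exact: _.
  have h3 := @filterI _ _ FF _ _ h1 h2.
  suff h4 : nbhs x (fun z => A z -> W (F z)) by exact: h4.
    apply: (@filterS _ _ FF _ _ _ h3) => z [H1 H2] Az.
  have ez : p z = y i.
    by apply: contrapT => nz; apply: H2; split.
  by rewrite /= (FE i z ez); apply: H1.
have FcZ : {within AZ, continuous (F : ZT p S -> Rdefinitions.R)}.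
  apply/subspace_continuousP => x Ax W nW.
  exact: (nbhsXZ hX cX hY pc pfc Ax (FcX x Ax W nW)).
have [M Mpos bd] : exists2 M, (0 < M)%R & forall x, A x -> (`|F x| <= M)%R.
  have cA : compact A := subclosed_compact cAX cX (@subsetT _ _).
  have cFA : compact (F @` A).
    exact: continuous_compact ((subspace_continuousP _ _).2 FcX) cA.
  have [M0 [_ HM]] := @compact_bounded Rdefinitions.R Rdefinitions.R^o (F @` A) cFA.
  have h1 : (1 <= Num.max 1 M0)%R by rewrite le_max lexx.
  have h2 : (M0 <= Num.max 1 M0)%R by rewrite le_max lexx orbT.
  exists (Num.max 1 M0 + 1)%R; first lra.
  move=> x Ax; apply: (HM (Num.max 1 M0 + 1)%R); first lra.
  by exists x.
have [g [gF gc gb]] := @continuous_bounded_extension (ZT p S) Rdefinitions.R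
  (@zT_normal X Y hX cX hY p pc pfc S) AZ cAZ F M Mpos FcZ bd.
exists g; split; [|split].
- move=> x W nW; apply: (nbhsZX (p:=p) (S:=S)); exact: gc x W nW.
- move=> i x e; rewrite -(FE i x e); apply/esym/gF; rewrite inE.
  by exists i.
- move=> y' ny' x1 x2 e1 e2.
  have r : zrel p S x1 x2.
    right; split; first by rewrite e1 e2.
    by rewrite e1 => -[i _ ei]; exact: ny' i (esym ei).
  apply: (cvg_unique (@Rhausdorff _) (F := g @ nbhs (x2 : ZT p S))).
  + move=> W nW; apply: (nbhsZ_rel r); exact: gc x1 W nW.
  + exact: gc x2.
Qed.
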